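(* Let $T$ be a complete first-order theory and $\varphi(x,y)$ a formula. The following are equivalent: (1) $T$ admits arbitrary cograph consistency-inconsistency patterns for $\varphi(x,y)$; (2) $T$ has a $(2,\omega,\omega)$-weave for $\varphi(x,y)$ of depth $\omega$ (equivalently, a strong one); (3) $T$ has a $(2,1,\omega)$-weave for $\varphi(x,y)$ of depth $\omega$ (equivalently, a strong one); (4) for every $d<\omega$, $T$ has a $(2,\omega,\omega)$-weave for $\varphi(x,y)$ of depth $d$; (5) for every $d<\omega$, $T$ has a $(2,1,\omega)$-weave for $\varphi(x,y)$ of depth $d$.
   Context: Cographs: the smallest class of finite graphs containing the one-vertex graph and closed under disjoint unions (coproducts) and graph joins (disjoint union plus all edges between the two parts). $T$ admits arbitrary cograph consistency-inconsistency patterns for $\varphi(x,y)$ if for every cograph $(V,E)$ there is a family $(b_v:v\in V)$ of parameters in a model of $T$ such that for every $V_0\subseteq V$, $\{\varphi(x,b_v):v\in V_0\}$ is consistent iff $V_0$ is an anticlique (contains no edge). Weaves: $2^2=\{0,1\}^2$; for $L$ an ordinal ($\omega$ or finite $d$), $(2^2)^L$ is the set of functions $L\to2^2$, $(2^2)^{<L}$ the set of sequences of length $<L$, $\tau^\frown a$ concatenation. For $A,B\subseteq(2^2)^L$: $A$ narrowly below $B$: some $\tau\in(2^2)^{<L}$, $i<2$, with all elements of $A$ extending $\tau^\frown(i,0)$ and all of $B$ extending $\tau^\frown(i,1)$; $A$ narrowly to the left of $B$: some $\tau$, $j<2$, $A$'s extending $\tau^\frown(0,j)$, $B$'s extending $\tau^\frown(1,j)$;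 $A$ widely to the left of $B$: some $\sigma$, $A$'s extending $\sigma^\frown(0,0)$ or $\sigma^\frown(0,1)$, $B$'s extending $\sigma^\frown(1,0)$ or $\sigma^\frown(1,1)$. For $n\le\omega$: finite up-$n$-combs form the smallest class of finite sets containing singletons and containing $A\cup B$ whenever $A,B$ are in it, $|A|\le n$ and $A$ narrowly below $B$; finite right-$n$-combs likewise with narrowly left; finite wide right-$n$-combs: smallest class containing singletons and containing $A\cup B$ whenever $A,B$ are finite right-$n$-combs, $|A|\le n$, $A$ widely left of $B$. A $(k,m,n)$-weave for $\varphi$ of depth $L$ is $(b_\sigma:\sigma\in(2^2)^L)$ with $\{\varphi(x,b_\sigma):\sigma\in C\}$ $k$-inconsistent for finite up-$m$-combs $C$ and consistent for finite right-$n$-combs $C$; strong if also consistent for finite wide right-$n$-combs $C$. *)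

(* Defs.v *)
From mathcomp Require Import all_boot.
From Stdlib Require List.
Set Implicit Arguments.
Unset Strict Implicit.
Unset Printing Implicit Defensive.

Record signature := Signature {
  fsym : Type; rsym : Type;
  farity : fsym -> nat; rarity : rsym -> nat }.

Inductive term (L : signature) : Type :=
| Var : nat -> term L
| App : forall f : fsym L, ('I_(farity f) -> term L) -> term L.

Inductive formula (L : signature) : Type :=
| FEq : term L -> term L -> formula L
| FRel : forall r : rsym L, ('I_(rarity r) -> term L) -> formula L
| FNeg : formula L -> formula L
| FAnd : formula L -> formula L -> formula L
| FEx : nat -> formula L -> formula L.

Record structure (L : signature) := Structure {
  dom :> Type;
  dom_inh : dom;
  finterp : forall f : fsym L, ('I_(farity f) -> dom) -> dom;
  rinterp : forall r : rsym L, ('I_(rarity r) -> dom) -> Prop }.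

Fixpoint tm_eval (L : signature) (M : structure L) (e : nat -> M) (t : term L) : M :=
  match t with
  | Var i => e i
  | App f args => finterp (fun j => tm_eval e (args j))
  end.

Definition upd (A : Type) (e : nat -> A) (i : nat) (d : A) : nat -> A :=
  fun j => if j == i then d else e j.

Fixpoint sat (L : signature) (M : structure L) (e : nat -> M) (phi : formula L) : Prop :=
  match phi with
  | FEq t1 t2 => tm_eval e t1 = tm_eval e t2
  | FRel r args => rinterp (fun j => tm_eval e (args j))
  | FNeg psi => ~ sat e psi
  | FAnd psi1 psi2 => sat e psi1 /\ sat e psi2
  | FEx i psi => exists d : M, sat (upd e i d) psi
  end.

Fixpoint tm_occ (L : signature) (i : nat) (t : term L) : Prop :=
  match t with
  | Var j => j = i
  | App f args => exists j, tm_occ i (args j)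
  end.

Fixpoint free_in (L : signature) (i : nat) (phi : formula L) : Prop :=
  match phi with
  | FEq t1 t2 => tm_occ i t1 \/ tm_occ i t2
  | FRel r args => exists j, tm_occ i (args j)
  | FNeg psi => free_in i psi
  | FAnd psi1 psi2 => free_in i psi1 \/ free_in i psi2
  | FEx j psi => j <> i /\ free_in i psi
  end.

Definition sentence (L : signature) (phi : formula L) : Prop :=
  forall i, ~ free_in i phi.

Definition models (L : signature) (M : structure L) (T : formula L -> Prop) : Prop :=
  forall psi, T psi -> forall e : nat -> M, sat e psi.

Definition entails (L : signature) (T : formula L -> Prop) (psi : formula L) : Prop :=
  forall M : structure L, models M T -> forall e : nat -> M, sat e psi.

Definition complete_theory (L : signature) (T : formula L -> Prop) : Prop :=
  (forall psi, T psi -> sentence psi) /\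
  (exists M : structure L, models M T) /\
  (forall psi, sentence psi -> entails T psi \/ entails T (FNeg psi)).

(* phi(x,y): x = (v_0,...,v_{n-1}), y = (v_n,...,v_{n+m-1}).
   Assignment for x := a, y := b. *)
Definition xy_env (A : Type) (n : nat) (a b : nat -> A) : nat -> A :=
  fun i => if i < n then a i else b (i - n).

(* {phi(x, b_p) : p in S} is consistent (with the elementary diagram of M):
   for the finite sets S considered here this means it is realized in M. *)
Definition consistent (L : signature) (M : structure L) (n : nat) (phi : formula L)
  (P : Type) (b : P -> nat -> M) (S : P -> Prop) : Prop :=
  exists a : nat -> M, forall p, S p -> sat (xy_env n a (b p)) phi.

Definition k_inconsistent (L : signature) (M : structure L) (n : nat) (phi : formula L)
  (P : Type) (b : P -> nat -> M) (k : nat) (S : P -> Prop) : Prop :=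
  forall l : seq P, size l = k -> List.NoDup l -> (forall p, List.In p l -> S p) ->
    ~ consistent n phi b (fun p => List.In p l).

Definition union_rel (V1 V2 : finType) (E1 : rel V1) (E2 : rel V2) : rel (V1 + V2)%type :=
  fun u v => match u, v with
             | inl x, inl y => E1 x y
             | inr x, inr y => E2 x y
             | _, _ => false
             end.

Definition join_rel (V1 V2 : finType) (E1 : rel V1) (E2 : rel V2) : rel (V1 + V2)%type :=
  fun u v => match u, v with
             | inl x, inl y => E1 x y
             | inr x, inr y => E2 x y
             | _, _ => true
             end.

Inductive cograph : forall V : finType, rel V -> Prop :=
| cograph_one : cograph (V := unit) (fun _ _ => false)
| cograph_union (V1 V2 : finType) (E1 : rel V1) (E2 : rel V2) :
    cograph E1 -> cograph E2 -> cograph (union_rel E1 E2)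
| cograph_join (V1 V2 : finType) (E1 : rel V1) (E2 : rel V2) :
    cograph E1 -> cograph E2 -> cograph (join_rel E1 E2)
| cograph_iso (V W : finType) (E : rel V) (E' : rel W) (f : V -> W) :
    cograph E -> bijective f -> (forall x y, E' (f x) (f y) = E x y) -> cograph E'.

Definition anticlique (V : Type) (E : rel V) (V0 : V -> Prop) : Prop :=
  forall u v, V0 u -> V0 v -> ~~ E u v.

Definition admits_cograph_patterns (L : signature) (T : formula L -> Prop)
  (n : nat) (phi : formula L) : Prop :=
  forall (V : finType) (E : rel V), cograph E ->
    exists M : structure L, models M T /\
    exists b : V -> nat -> M,
      forall V0 : V -> Prop, consistent n phi b V0 <-> anticlique E V0.

(* Weaves. Points of (2^2)^L are abstracted by a type P with a         *)
(* coordinate map get; depth : option nat, None = omega.               *)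
(* Cardinal bounds n <= omega: option nat, None = omega.               *)

Definition lt_depth (depth : option nat) (k : nat) : Prop :=
  match depth with None => True | Some d => k < d end.

Definition card_le (P : Type) (bound : option nat) (A : P -> Prop) : Prop :=
  match bound with
  | None => True
  | Some k => exists l : seq P, size l <= k /\ forall p, A p -> List.In p l
  end.

Definition extends (P : Type) (get : P -> nat -> bool * bool)
  (tau : seq (bool * bool)) (a : bool * bool) (p : P) : Prop :=
  (forall i, i < size tau -> get p i = nth (false, false) tau i) /\ get p (size tau) = a.

Definition narrowly_below (P : Type) (get : P -> nat -> bool * bool) (depth : option nat)
  (A B : P -> Prop) : Prop :=
  exists tau : seq (bool * bool), lt_depth depth (size tau) /\ exists i : bool,
    (forall p, A p -> extends get tau (i, false) p) /\
    (forall p, B p -> extends get tau (i, true) p).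

Definition narrowly_left (P : Type) (get : P -> nat -> bool * bool) (depth : option nat)
  (A B : P -> Prop) : Prop :=
  exists tau : seq (bool * bool), lt_depth depth (size tau) /\ exists j : bool,
    (forall p, A p -> extends get tau (false, j) p) /\
    (forall p, B p -> extends get tau (true, j) p).

Definition widely_left (P : Type) (get : P -> nat -> bool * bool) (depth : option nat)
  (A B : P -> Prop) : Prop :=
  exists sigma : seq (bool * bool), lt_depth depth (size sigma) /\
    (forall p, A p -> extends get sigma (false, false) p \/ extends get sigma (false, true) p) /\
    (forall p, B p -> extends get sigma (true, false) p \/ extends get sigma (true, true) p).

Inductive up_comb (P : Type) (get : P -> nat -> bool * bool) (depth : option nat)
  (bound : option nat) : (P -> Prop) -> Prop :=
| up_comb_single (p : P) : up_comb get depth bound (fun q => q = p)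
| up_comb_union (A B : P -> Prop) :
    up_comb get depth bound A -> up_comb get depth bound B ->
    card_le bound A -> narrowly_below get depth A B ->
    up_comb get depth bound (fun q => A q \/ B q).

Inductive right_comb (P : Type) (get : P -> nat -> bool * bool) (depth : option nat)
  (bound : option nat) : (P -> Prop) -> Prop :=
| right_comb_single (p : P) : right_comb get depth bound (fun q => q = p)
| right_comb_union (A B : P -> Prop) :
    right_comb get depth bound A -> right_comb get depth bound B ->
    card_le bound A -> narrowly_left get depth A B ->
    right_comb get depth bound (fun q => A q \/ B q).

Inductive wide_right_comb (P : Type) (get : P -> nat -> bool * bool) (depth : option nat)
  (bound : option nat) : (P -> Prop) -> Prop :=
| wide_right_comb_single (p : P) : wide_right_comb get depth bound (fun q => q = p)
| wide_right_comb_union (A B : P -> Prop) :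
    right_comb get depth bound A -> right_comb get depth bound B ->
    card_le bound A -> widely_left get depth A B ->
    wide_right_comb get depth bound (fun q => A q \/ B q).

Definition is_weave (L : signature) (M : structure L) (n : nat) (phi : formula L)
  (P : Type) (get : P -> nat -> bool * bool) (depth : option nat)
  (k : nat) (mm nn : option nat) (strong : bool) (b : P -> nat -> M) : Prop :=
  (forall C, up_comb get depth mm C -> k_inconsistent n phi b k C) /\
  (forall C, right_comb get depth nn C -> consistent n phi b C) /\
  (strong -> forall C, wide_right_comb get depth nn C -> consistent n phi b C).

Definition omega_get (s : nat -> bool * bool) (i : nat) : bool * bool := s i.

Definition has_weave_omega (L : signature) (T : formula L -> Prop) (n : nat) (phi : formula L)
  (k : nat) (mm nn : option nat) (strong : bool) : Prop :=
  exists M : structure L, models M T /\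
  exists b : (nat -> bool * bool) -> nat -> M,
    is_weave n phi omega_get None k mm nn strong b.

Definition tuple_get (d : nat) (s : d.-tuple (bool * bool)) (i : nat) : bool * bool :=
  nth (false, false) s i.

Definition has_weave_depth (L : signature) (T : formula L -> Prop) (n : nat) (phi : formula L)
  (d : nat) (k : nat) (mm nn : option nat) (strong : bool) : Prop :=
  exists M : structure L, models M T /\
  exists b : d.-tuple (bool * bool) -> nat -> M,
    is_weave n phi (@tuple_get d) (Some d) k mm nn strong b.

(* Main.v *)
Require Import Defs.
From mathcomp Require Import all_boot.
From Stdlib Require Import FunctionalExtensionality PropExtensionality ProofIrrelevance ClassicalEpsilon Classical.
From Stdlib Require List.
From mathcomp Require boolp classical_sets filter.

Set Implicit Arguments.
Unset Strict Implicit.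
Unset Printing Implicit Defensive.


Lemma setext (P : Type) (A B : P -> Prop) : (forall q, A q <-> B q) -> A = B.
Proof. move=> H; apply: functional_extensionality => q; apply: propositional_extensionality; exact: H. Qed.

Definition img (P Q : Type) (h : P -> Q) (C : P -> Prop) : Q -> Prop :=
  fun q => exists p, C p /\ q = h p.

Lemma img_single (P Q : Type) (h : P -> Q) p : img h (fun q => q = p) = (fun q => q = h p).
Proof. apply: setext => q; split; [by case=> p' [-> ->]|move=> ->; by exists p]. Qed.

Lemma img_union (P Q : Type) (h : P -> Q) (A B : P -> Prop) :
  img h (fun q => A q \/ B q) = (fun q => img h A q \/ img h B q).
Proof.
apply: setext => q; split.
- by case=> p [[Ap|Bp] ->]; [left|right]; exists p.
- by case=> -[p [Hp ->]]; exists p; split=> //; [left|right].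
Qed.

Lemma card_le_img (P Q : Type) (h : P -> Q) bnd (A : P -> Prop) :
  card_le bnd A -> card_le bnd (img h A).
Proof.
case: bnd => //= k [l [Hl HA]]; exists (map h l); rewrite size_map; split=> //.
move=> q [p [Ap ->]]; apply: List.in_map; exact: HA.
Qed.

Section CombMap.
Variables (P Q : Type) (get1 : P -> nat -> bool * bool) (get2 : Q -> nat -> bool * bool).
Variables (d1 d2 : option nat) (h : P -> Q) (g : seq (bool * bool) -> seq (bool * bool)).
Hypothesis Hd : forall tau, lt_depth d1 (size tau) -> lt_depth d2 (size (g tau)).
Hypothesis He : forall tau c p, lt_depth d1 (size tau) -> extends get1 tau c p ->
  extends get2 (g tau) c (h p).

Lemma nb_map A B : narrowly_below get1 d1 A B -> narrowly_below get2 d2 (img h A) (img h B).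
Proof.
case=> tau [Ht [i [HA HB]]]; exists (g tau); split; first exact: Hd.
by exists i; split=> q [p [Hp ->]]; apply: He => //; [apply: HA|apply: HB].
Qed.

Lemma nl_map A B : narrowly_left get1 d1 A B -> narrowly_left get2 d2 (img h A) (img h B).
Proof.
case=> tau [Ht [i [HA HB]]]; exists (g tau); split; first exact: Hd.
by exists i; split=> q [p [Hp ->]]; apply: He => //; [apply: HA|apply: HB].
Qed.

Lemma wl_map A B : widely_left get1 d1 A B -> widely_left get2 d2 (img h A) (img h B).
Proof.
case=> tau [Ht [HA HB]]; exists (g tau); split; first exact: Hd.
by split=> q [p [Hp ->]]; [case: (HA p Hp)|case: (HB p Hp)] => H;
  [left|right|left|right]; apply: He.
Qed.

Lemma up_map bnd C : up_comb get1 d1 bnd C -> up_comb get2 d2 bnd (img h C).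
Proof.
elim=> [p|A B _ IA _ IB cA nAB]; first by rewrite img_single; exact: up_comb_single.
rewrite img_union; apply: up_comb_union => //; [exact: card_le_img|exact: nb_map].
Qed.

Lemma right_map bnd C : right_comb get1 d1 bnd C -> right_comb get2 d2 bnd (img h C).
Proof.
elim=> [p|A B _ IA _ IB cA nAB]; first by rewrite img_single; exact: right_comb_single.
rewrite img_union; apply: right_comb_union => //; [exact: card_le_img|exact: nl_map].
Qed.

Lemma wide_map bnd C : wide_right_comb get1 d1 bnd C -> wide_right_comb get2 d2 bnd (img h C).
Proof.
case=> [p|A B RA RB cA nAB]; first by rewrite img_single; exact: wide_right_comb_single.
rewrite img_union; apply: wide_right_comb_union => //;
  [exact: right_map|exact: right_map|exact: card_le_img|exact: wl_map].
Qed.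
End CombMap.

Lemma img_id (P : Type) (C : P -> Prop) : img id C = C.
Proof. apply: setext => q; split; [by case=> p [Hp ->]|by move=> Hq; exists q]. Qed.

Lemma up_bound_weaken (P : Type) get d (C : P -> Prop) :
  up_comb get d (Some 1) C -> up_comb get d None C.
Proof. elim=> [p|A B _ IA _ IB cA nAB]; [exact: up_comb_single|exact: up_comb_union]. Qed.

Section CombBound.
Variables (P : Type) (get : P -> nat -> bool * bool).

Lemma up_bound bnd C : up_comb get None bnd C ->
  exists D0, forall d, D0 <= d -> up_comb get (Some d) bnd C.
Proof.
elim=> [p|A B _ [DA IA] _ [DB IB] cA [tau [_ [i [HA HB]]]]].
  by exists 0 => d _; exact: up_comb_single.
exists (maxn (size tau).+1 (maxn DA DB)) => d; rewrite !geq_max => /and3P [h1 h2 h3].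
apply: up_comb_union => //; [exact: IA|exact: IB|].
by exists tau; split=> //; exists i.
Qed.

Lemma right_bound bnd C : right_comb get None bnd C ->
  exists D0, forall d, D0 <= d -> right_comb get (Some d) bnd C.
Proof.
elim=> [p|A B _ [DA IA] _ [DB IB] cA [tau [_ [i [HA HB]]]]].
  by exists 0 => d _; exact: right_comb_single.
exists (maxn (size tau).+1 (maxn DA DB)) => d; rewrite !geq_max => /and3P [h1 h2 h3].
apply: right_comb_union => //; [exact: IA|exact: IB|].
by exists tau; split=> //; exists i.
Qed.

Lemma wide_bound bnd C : wide_right_comb get None bnd C ->
  exists D0, forall d, D0 <= d -> wide_right_comb get (Some d) bnd C.
Proof.
case=> [p|A B RA RB cA [tau [_ [HA HB]]]].
  by exists 0 => d _; exact: wide_right_comb_single.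
have [DA IA] := right_bound RA; have [DB IB] := right_bound RB.
exists (maxn (size tau).+1 (maxn DA DB)) => d; rewrite !geq_max => /and3P [h1 h2 h3].
apply: wide_right_comb_union => //; [exact: IA|exact: IB|].
by exists tau.
Qed.
End CombBound.


Fixpoint wedge (s t : seq (bool * bool)) : bool :=
  match s, t with
  | x :: s', y :: t' => if x == y then wedge s' t' else x.1 == y.1
  | _, _ => false
  end.

Lemma wedgeC s t : wedge s t = wedge t s.
Proof.
elim: s t => [|x s IH] [|y t] //=; rewrite eq_sym IH; case: eqP => // _; exact: eq_sym.
Qed.

Lemma wedge_irr s : wedge s s = false.
Proof. by elim: s => //= x s IH; rewrite eqxx. Qed.

Lemma wedge_split tau a b s t :
  (forall i, i < size tau -> nth (false, false) s i = nth (false, false) tau i) ->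
  nth (false, false) s (size tau) = a ->
  (forall i, i < size tau -> nth (false, false) t i = nth (false, false) tau i) ->
  nth (false, false) t (size tau) = b ->
  size tau < size s -> size tau < size t -> a != b ->
  wedge s t = (a.1 == b.1).
Proof.
elim: tau s t => [|c tau IH] [|x s] [|y t] //=.
  by move=> _ -> _ -> _ _ /negbTE ->.
move=> Hs Ha Ht Hb ls lt nab.
have -> : x = c by have := Hs 0; apply.
have -> : y = c by have := Ht 0; apply.
rewrite eqxx; apply: IH => // i Hi; [exact: (Hs i.+1)|exact: (Ht i.+1)].
Qed.

Definition Gd (d : nat) : rel (d.-tuple (bool * bool)) := fun s t => wedge s t.

Definition tcons d (a : bool * bool) (s : d.-tuple (bool * bool)) : d.+1.-tuple (bool * bool) :=
  cons_tuple a s.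

Lemma Gd_cograph d : cograph (@Gd d).
Proof.
elim: d => [|d IH].
  apply: (@cograph_iso unit _ (fun _ _ => false) _ (fun _ => [tuple])).
  - exact: cograph_one.
  - exists (fun _ => tt); first by case.
    by move=> t; apply: val_inj; rewrite /= (size0nil (size_tuple t)).
  - by move=> [] [].
set V := ((d.-tuple (bool*bool) + d.-tuple (bool*bool)) + (d.-tuple (bool*bool) + d.-tuple (bool*bool)))%type.
pose f (v : V) : d.+1.-tuple (bool * bool) :=
  match v with
  | inl (inl s) => tcons (false, false) s
  | inl (inr s) => tcons (false, true) s
  | inr (inl s) => tcons (true, false) s
  | inr (inr s) => tcons (true, true) s
  end.
pose g (t : d.+1.-tuple (bool * bool)) : V :=
  match thead t with
  | (false, false) => inl (inl (behead_tuple t))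
  | (false, true) => inl (inr (behead_tuple t))
  | (true, false) => inr (inl (behead_tuple t))
  | (true, true) => inr (inr (behead_tuple t))
  end.
apply: (@cograph_iso V _ (union_rel (join_rel (@Gd d) (@Gd d)) (join_rel (@Gd d) (@Gd d))) _ f).
- by apply: cograph_union; apply: cograph_join.
- exists g.
    have E a s : thead (tcons a s) = a /\ behead_tuple (tcons a s) = s.
      by split; [exact: theadE|apply: val_inj].
    case=> [[s|s]|[s|s]]; rewrite /g /f;
    [have [e1 e2] := E d (false,false) s|have [e1 e2] := E d (false,true) s
    |have [e1 e2] := E d (true,false) s|have [e1 e2] := E d (true,true) s];
    by rewrite e1 e2.
  move=> t; rewrite [t in RHS]tuple_eta /g /f /tcons.
  by case: (thead t) => [[] []]; apply: val_inj.
- by case=> [[s|s]|[s|s]] [[t|t]|[t|t]].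
Qed.

Section GdWeave.
Variable d : nat.

Lemma cross_edge tau a b (p q : d.-tuple (bool * bool)) :
  lt_depth (Some d) (size tau) ->
  extends (@tuple_get d) tau a p -> extends (@tuple_get d) tau b q -> a != b ->
  Gd p q = (a.1 == b.1).
Proof.
rewrite /= => lt [Hp1 Hp2] [Hq1 Hq2] nab; rewrite /Gd.
by apply: (wedge_split (tau := tau)) => //; rewrite size_tuple.
Qed.

Lemma GdC (p q : d.-tuple (bool * bool)) : Gd p q = Gd q p.
Proof. exact: wedgeC. Qed.

Lemma up_edges bnd C : up_comb (@tuple_get d) (Some d) bnd C ->
  forall p q, C p -> C q -> p != q -> Gd p q.
Proof.
elim=> [p0|A B _ IA _ IB cA [tau [lt [i [HA HB]]]]].
  by move=> p q -> ->; rewrite eqxx.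
move=> p q [Ap|Bp] [Aq|Bq] npq.
- exact: IA.
- by rewrite (cross_edge lt (HA p Ap) (HB q Bq)) //; case: i {HA HB}.
- by rewrite GdC (cross_edge lt (HA q Aq) (HB p Bp)) //; case: i {HA HB}.
- exact: IB.
Qed.

Lemma right_noedges bnd C : right_comb (@tuple_get d) (Some d) bnd C ->
  forall p q, C p -> C q -> ~~ Gd p q.
Proof.
elim=> [p0|A B _ IA _ IB cA [tau [lt [i [HA HB]]]]].
  by move=> p q -> ->; rewrite /Gd wedge_irr.
move=> p q [Ap|Bp] [Aq|Bq].
- exact: IA.
- by rewrite (cross_edge lt (HA p Ap) (HB q Bq)) //; case: i {HA HB}.
- by rewrite GdC (cross_edge lt (HA q Aq) (HB p Bp)) //; case: i {HA HB}.
- exact: IB.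
Qed.

Lemma wide_noedges bnd C : wide_right_comb (@tuple_get d) (Some d) bnd C ->
  forall p q, C p -> C q -> ~~ Gd p q.
Proof.
case=> [p0|A B RA RB cA [tau [lt [HA HB]]]].
  by move=> p q -> ->; rewrite /Gd wedge_irr.
move=> p q [Ap|Bp] [Aq|Bq].
- exact: (right_noedges RA).
- case: (HA p Ap) => Hp; case: (HB q Bq) => Hq; by rewrite (cross_edge lt Hp Hq).
- case: (HA q Aq) => Hq; case: (HB p Bp) => Hp; by rewrite GdC (cross_edge lt Hq Hp).
- exact: (right_noedges RB).
Qed.
End GdWeave.

Lemma c1_depth (L : signature) (T : formula L -> Prop) n phi :
  admits_cograph_patterns T n phi -> forall d, has_weave_depth T n phi d 2 None None true.
Proof.
move=> c1 d; have [M [HM [b Hb]]] := c1 _ _ (Gd_cograph d).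
exists M; split=> //; exists b; split; [|split].
- move=> C HC l sl nd inC Hcons.
  case: l sl nd inC Hcons => [|p [|q [|]]] //= _ nd inC Hcons.
  have npq : p != q.
    apply/eqP => epq; subst q; inversion nd; subst.
    by match goal with H : ~ List.In _ _ |- _ => apply: H; left end.
  have /Hb Hac := Hcons.
  have := Hac p q (or_introl erefl) (or_intror (or_introl erefl)).
  by rewrite (up_edges HC (inC p (or_introl erefl)) (inC q (or_intror (or_introl erefl))) npq).
- move=> C HC; apply/Hb => u v Cu Cv; exact: (right_noedges HC).
- move=> _ C HC; apply/Hb => u v Cu Cv; exact: (wide_noedges HC).
Qed.


Definition pre (a : bool * bool) (s : nat -> bool * bool) : nat -> bool * bool :=
  fun i => if i is k.+1 then s k else a.

Lemma pre_ext a D1 D tau c p : D1 < D -> lt_depth (Some D1) (size tau) ->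
  extends omega_get tau c p ->
  lt_depth (Some D) (size (a :: tau)) /\ extends omega_get (a :: tau) c (pre a p).
Proof.
move=> lD /= lt [H1 H2]; split; first exact: leq_ltn_trans lD.
split=> [[|i]|] //= Hi; exact: H1.
Qed.

Lemma up_shift a D1 D b C : D1 < D -> up_comb omega_get (Some D1) b C ->
  up_comb omega_get (Some D) b (img (pre a) C).
Proof.
move=> lD; apply: (up_map (g := cons a)).
- by move=> tau lt /=; exact: leq_ltn_trans lD.
- by move=> tau c p lt He; case: (pre_ext a lD lt He).
Qed.

Lemma right_shift a D1 D b C : D1 < D -> right_comb omega_get (Some D1) b C ->
  right_comb omega_get (Some D) b (img (pre a) C).
Proof.
move=> lD; apply: (right_map (g := cons a)).
- by move=> tau lt /=; exact: leq_ltn_trans lD.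
- by move=> tau c p lt He; case: (pre_ext a lD lt He).
Qed.

Lemma img_pair (P Q : Type) (h : P -> Q) x y :
  img h (fun q => q = x \/ q = y) = (fun q => q = h x \/ q = h y).
Proof. by rewrite img_union !img_single. Qed.

Definition fsum (V1 V2 : Type) a1 a2 (f1 : V1 -> nat -> bool * bool) (f2 : V2 -> nat -> bool * bool)
  (v : V1 + V2) : nat -> bool * bool :=
  match v with inl x => pre a1 (f1 x) | inr y => pre a2 (f2 y) end.

Lemma img_fsum (V1 V2 : Type) a1 a2 f1 f2 (V0 : V1 + V2 -> Prop) :
  img (fsum a1 a2 f1 f2) V0 =
  (fun q => img (pre a1) (img f1 (fun x => V0 (inl x))) q \/
            img (pre a2) (img f2 (fun y => V0 (inr y))) q).
Proof.
apply: setext => q; split.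
- case=> -[x|y] [Hv ->]; [left|right]; [exists (f1 x)|exists (f2 y)]; split=> //; by [exists x|exists y].
- by case=> -[_ [[x [Hx ->]] ->]]; [exists (inl x) | exists (inr x)].
Qed.

Lemma or_empty_l (Q : Type) (A B : Q -> Prop) : (forall q, ~ A q) -> (fun q => A q \/ B q) = B.
Proof. by move=> HA; apply: setext => q; split=> [[/HA []|]|] //; right. Qed.
Lemma or_empty_r (Q : Type) (A B : Q -> Prop) : (forall q, ~ B q) -> (fun q => A q \/ B q) = A.
Proof. by move=> HB; apply: setext => q; split=> [[|/HB []]|] //; left. Qed.

Lemma rc_sum (V1 V2 : Type) a1 a2 f1 f2 D1 D2 (V0 : V1 + V2 -> Prop) :
  let D := (maxn D1 D2).+1 in
  (forall x, ~ V0 (inl x)) \/ right_comb omega_get (Some D1) None (img f1 (fun x => V0 (inl x))) ->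
  (forall y, ~ V0 (inr y)) \/ right_comb omega_get (Some D2) None (img f2 (fun y => V0 (inr y))) ->
  ((exists x, V0 (inl x)) -> (exists y, V0 (inr y)) -> a1 = (false, false) /\ a2 = (true, false)) ->
  (forall v, ~ V0 v) \/ right_comb omega_get (Some D) None (img (fsum a1 a2 f1 f2) V0).
Proof.
move=> D R1 R2 Hb.
have l1 : D1 < D by rewrite ltnS leq_maxl.
have l2 : D2 < D by rewrite ltnS leq_maxr.
have E0 (P Q R : Type) (h : P -> Q) (h' : Q -> R) (C : P -> Prop) :
   (forall x, ~ C x) -> forall q, ~ img h' (img h C) q.
  by move=> HC q [_ [[p [Cp _]] _]]; case: (HC p).
rewrite img_fsum.
case: R1 => [e1|R1]; case: R2 => [e2|R2].
- by left; case.
- right; rewrite or_empty_l; [exact: (right_shift _ l2 R2)|exact: E0].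
- right; rewrite or_empty_r; [exact: (right_shift _ l1 R1)|exact: E0].
- right.
  case: (classic (exists x, V0 (inl x))) => [ex1|nex1]; last first.
    have e1 : forall x, ~ V0 (inl x) by move=> x H; apply: nex1; exists x.
    rewrite or_empty_l; [exact: (right_shift _ l2 R2)|exact: E0].
  case: (classic (exists y, V0 (inr y))) => [ex2|nex2]; last first.
    have e2 : forall y, ~ V0 (inr y) by move=> y H; apply: nex2; exists y.
    rewrite or_empty_r; [exact: (right_shift _ l1 R1)|exact: E0].
  have [-> ->] := Hb ex1 ex2.
  apply: right_comb_union => //; [exact: (right_shift _ l1 R1)|exact: (right_shift _ l2 R2)|].
  exists [::]; split=> //; exists false.
  by split=> _ [_ [[x [_ ->]] ->]].
Qed.

Definition embed_prop (V : finType) (E : rel V) (D : nat) (f : V -> nat -> bool * bool) : Prop :=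
  [/\ (forall u v, u <> v -> exists2 i, i < D & f u i <> f v i),
      (forall u v, E u v -> up_comb omega_get (Some D) (Some 1) (fun q => q = f u \/ q = f v)),
      (forall V0 : V -> Prop, anticlique E V0 ->
         (forall v, ~ V0 v) \/ right_comb omega_get (Some D) None (img f V0)) &
      (forall u, ~~ E u u)].

Lemma up_pair_shift a D1 D (x y : nat -> bool * bool) : D1 < D ->
  up_comb omega_get (Some D1) (Some 1) (fun q => q = x \/ q = y) ->
  up_comb omega_get (Some D) (Some 1) (fun q => q = pre a x \/ q = pre a y).
Proof. by move=> lD H; rewrite -img_pair; apply: up_shift lD H. Qed.

Lemma embed (V : finType) (E : rel V) : cograph E -> exists D f, @embed_prop V E D f.
Proof.
elim=> {V E}.
- exists 0, (fun _ _ => (false, false)); split=> //.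
  + by move=> [] [].
  + move=> V0 _; case: (classic (V0 tt)) => [H|H]; last by left; case.
    right; have -> : img (fun (_ : unit) (_ : nat) => (false, false)) V0 = (fun q : nat -> bool * bool => q = (fun _ => (false, false))).
      by apply: setext => q; split=> [[[] [_ ->]]|->] //; exists tt.
    exact: right_comb_single.
- move=> V1 V2 E1 E2 _ [D1 [f1 [S1 U1 R1 I1]]] _ [D2 [f2 [S2 U2 R2 I2]]].
  have l1 : D1 < (maxn D1 D2).+1 by rewrite ltnS leq_maxl.
  have l2 : D2 < (maxn D1 D2).+1 by rewrite ltnS leq_maxr.
  exists (maxn D1 D2).+1, (fsum (false, false) (true, false) f1 f2); split.
  + move=> [x|x] [y|y] /= nxy.
    * have [|i Hi Hne] := S1 x y; first by move=> e; apply: nxy; rewrite e.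
      by exists i.+1 => //; exact: leq_ltn_trans Hi l1.
    * by exists 0.
    * by exists 0.
    * have [|i Hi Hne] := S2 x y; first by move=> e; apply: nxy; rewrite e.
      by exists i.+1 => //; exact: leq_ltn_trans Hi l2.
  + move=> [x|x] [y|y] //= Exy; [exact: up_pair_shift l1 (U1 _ _ Exy)|exact: up_pair_shift l2 (U2 _ _ Exy)].
  + move=> V0 HV0; apply: rc_sum => //.
    * by apply: R1 => u v Hu Hv; exact: (HV0 (inl u) (inl v)).
    * by apply: R2 => u v Hu Hv; exact: (HV0 (inr u) (inr v)).
  + by move=> [x|x] /=.
- move=> V1 V2 E1 E2 _ [D1 [f1 [S1 U1 R1 I1]]] _ [D2 [f2 [S2 U2 R2 I2]]].
  have l1 : D1 < (maxn D1 D2).+1 by rewrite ltnS leq_maxl.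
  have l2 : D2 < (maxn D1 D2).+1 by rewrite ltnS leq_maxr.
  exists (maxn D1 D2).+1, (fsum (false, false) (false, true) f1 f2); split.
  + move=> [x|x] [y|y] /= nxy.
    * have [|i Hi Hne] := S1 x y; first by move=> e; apply: nxy; rewrite e.
      by exists i.+1 => //; exact: leq_ltn_trans Hi l1.
    * by exists 0.
    * by exists 0.
    * have [|i Hi Hne] := S2 x y; first by move=> e; apply: nxy; rewrite e.
      by exists i.+1 => //; exact: leq_ltn_trans Hi l2.
  + have cross x y : up_comb omega_get (Some (maxn D1 D2).+1) (Some 1)
        (fun q => q = pre (false, false) (f1 x) \/ q = pre (false, true) (f2 y)).
      apply: up_comb_union; [exact: up_comb_single|exact: up_comb_single| |].
      * by exists [:: pre (false, false) (f1 x)]; split=> // q ->; left.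
      * by exists [::]; split=> //; exists false; split=> q ->.
    move=> [x|x] [y|y] //= Exy.
    * exact: up_pair_shift l1 (U1 _ _ Exy).
    * have -> : (fun q => q = pre (false, true) (f2 x) \/ q = pre (false, false) (f1 y)) =
                (fun q => q = pre (false, false) (f1 y) \/ q = pre (false, true) (f2 x)).
        by apply: setext => q; split; case; auto.
      exact: cross.
    * exact: up_pair_shift l2 (U2 _ _ Exy).
  + move=> V0 HV0; apply: rc_sum => //.
    * by apply: R1 => u v Hu Hv; exact: (HV0 (inl u) (inl v)).
    * by apply: R2 => u v Hu Hv; exact: (HV0 (inr u) (inr v)).
    * by move=> [x Hx] [y Hy]; have := HV0 (inl x) (inr y) Hx Hy.
  + by move=> [x|x] /=.
- move=> V W E E' f0 _ [D [f [S U R I]]] [g0 gK fK] HE.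
  exists D, (fun w => f (g0 w)); split.
  + move=> u v nuv; apply: S => e; apply: nuv.
    by rewrite -(fK u) -(fK v) e.
  + move=> u v Euv; apply: U; by rewrite -HE !fK.
  + move=> V0 HV0.
    have HV0' : anticlique E (fun v => V0 (f0 v)).
      by move=> u v Hu Hv; rewrite -HE; exact: HV0.
    case: (R _ HV0') => [e|Rc]; [left|right].
      by move=> w Hw; apply: (e (g0 w)); rewrite fK.
    have -> : img (fun w => f (g0 w)) V0 = img f (fun v => V0 (f0 v)); last exact: Rc.
    apply: setext => q; split.
      by move=> [w [Hw ->]]; exists (g0 w); rewrite fK.
    by move=> [v [Hv ->]]; exists (f0 v); rewrite gK.
  + by move=> u; rewrite -(fK u) HE.
Qed.

Lemma patterns_from (L : signature) (M : structure L) n phi (V : finType) (E : rel V)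
  (P : Type) (get : P -> nat -> bool * bool) dd (b : P -> nat -> M) (f : V -> P) :
  is_weave n phi get dd 2 (Some 1) None false b ->
  (forall u v, f u = f v -> u = v) ->
  (forall u v, E u v -> up_comb get dd (Some 1) (fun q => q = f u \/ q = f v)) ->
  (forall V0, anticlique E V0 -> (forall v, ~ V0 v) \/ right_comb get dd None (img f V0)) ->
  (forall u, ~~ E u u) ->
  forall V0 : V -> Prop, consistent n phi (fun v => b (f v)) V0 <-> anticlique E V0.
Proof.
move=> [Wup [Wr _]] finj Hup Hr Hirr V0; split.
- move=> [a Ha] u v Hu Hv; apply/negP => Euv.
  have nuv : u <> v by move=> e; subst v; move: (Hirr u); rewrite Euv.
  apply: (Wup _ (Hup _ _ Euv) [:: f u; f v]) => //.
  + constructor; last by constructor; [by []|constructor].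
    by case=> // e; apply: nuv; apply: finj.
  + by move=> p [->|[->|[]]]; [left|right].
  + exists a => p [<-|[<-|[]]]; [exact: Ha|exact: Ha].
- move=> Hanti; case: (Hr _ Hanti) => [e|Rc].
  + exists (fun _ => dom_inh M) => v Hv; case: (e v Hv).
  + have [a Ha] := Wr _ Rc; exists a => v Hv; apply: Ha; by exists v.
Qed.

Lemma c1_of_omega (L : signature) (T : formula L -> Prop) n phi :
  has_weave_omega T n phi 2 (Some 1) None false -> admits_cograph_patterns T n phi.
Proof.
move=> [M [HM [b Hb]]] V E HE.
have [D [f [S U R I]]] := embed HE.
exists M; split=> //; exists (fun v => b (f v)).
have Hd : forall tau : seq (bool * bool), lt_depth (Some D) (size tau) -> lt_depth None (size tau) by [].
have He : forall tau c (p : nat -> bool * bool), lt_depth (Some D) (size tau) ->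
   extends omega_get tau c p -> extends omega_get tau c (id p) by [].
apply: (patterns_from Hb) => //.
- move=> u v e; case: (classic (u = v)) => // nuv.
  by have [i _] := S u v nuv; rewrite e.
- move=> u v Euv; rewrite -(img_id (fun q => q = f u \/ q = f v)).
  exact: (up_map Hd He (U _ _ Euv)).
- move=> V0 HV0; case: (R _ HV0) => [e|Rc]; [by left|right].
  rewrite -(img_id (img f V0)); exact: (right_map Hd He Rc).
Qed.

Definition trunc (d : nat) (s : nat -> bool * bool) : d.-tuple (bool * bool) :=
  @Tuple d _ (mkseq s d) (introT eqP (size_mkseq s d)).

Lemma trunc_get d s i : i < d -> tuple_get (trunc d s) i = s i.
Proof. by move=> Hi; rewrite /tuple_get /= nth_mkseq. Qed.

Lemma trunc_ext d tau c (p : nat -> bool * bool) : lt_depth (Some d) (size tau) ->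
  extends omega_get tau c p -> extends (@tuple_get d) tau c (trunc d p).
Proof.
move=> /= lt [H1 H2]; split; last by rewrite trunc_get.
move=> i Hi; rewrite trunc_get; [exact: H1 | exact: (ltn_trans Hi lt)].
Qed.

Lemma c1_of_depth (L : signature) (T : formula L -> Prop) n phi :
  (forall d, has_weave_depth T n phi d 2 (Some 1) None false) -> admits_cograph_patterns T n phi.
Proof.
move=> H V E HE.
have [D [f [S U R I]]] := embed HE.
have [M [HM [b Hb]]] := H D.
exists M; split=> //; exists (fun v => b (trunc D (f v))).
have Hd : forall tau : seq (bool * bool), lt_depth (Some D) (size tau) -> lt_depth (Some D) (size (id tau)) by [].
have He := @trunc_ext D.
apply: (patterns_from (f := fun v => trunc D (f v)) Hb) => //.
- move=> u v e; case: (classic (u = v)) => // nuv.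
  have [i Hi Hne] := S u v nuv; case: Hne.
  by rewrite -(trunc_get (f u) Hi) -(trunc_get (f v) Hi) e.
- move=> u v Euv; rewrite -(img_pair (trunc D)).
  exact: (up_map Hd He (U _ _ Euv)).
- move=> V0 HV0; case: (R _ HV0) => [e|Rc]; [by left|right].
  have -> : img (fun v => trunc D (f v)) V0 = img (trunc D) (img f V0).
    apply: setext => q; split; first by move=> [v [Hv ->]]; exists (f v); split=> //; exists v.
    by move=> [_ [[v [Hv ->]] ->]]; exists v.
  exact: (right_map Hd He Rc).
Qed.


Section Ultra.
Variable L : signature.
Variable Mf : nat -> structure L.
Variable U : (nat -> Prop) -> Prop.
Hypothesis UT : U (fun _ => True).
Hypothesis UI : forall A B, U A -> U B -> U (fun d => A d /\ B d).
Hypothesis US : forall A B : nat -> Prop, (forall d, A d -> B d) -> U A -> U B.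
Hypothesis U0 : ~ U (fun _ => False).
Hypothesis UC : forall A, U A \/ U (fun d => ~ A d).

Lemma U_all A : (forall d, A d) -> U A.
Proof. by move=> H; apply: US UT => d _; exact: H. Qed.

Lemma U_ex A : U A -> exists d, A d.
Proof.
move=> HA; apply: NNPP => nex; apply: U0; apply: US HA => d Ad; apply: nex; by exists d.
Qed.

Lemma U_seq (J : Type) (l : seq J) (A : J -> nat -> Prop) :
  (forall j, U (A j)) -> U (fun d => forall j, List.In j l -> A j d).
Proof.
move=> H; elim: l => [|j l IH]; first exact: U_all.
apply: US (UI (H j) IH) => d [Hj Hl] j' [<-|Hj']; [exact: Hj|exact: Hl].
Qed.

Lemma U_ord k (A : 'I_k -> nat -> Prop) : (forall j, U (A j)) -> U (fun d => forall j, A j d).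
Proof.
move=> H; apply: US (U_seq (enum 'I_k) H) => d Hd j; apply: Hd.
have : j \in enum 'I_k by rewrite mem_enum.
elim: (enum 'I_k) => //= x l IH; rewrite in_cons => /orP [/eqP ->|/IH]; auto.
Qed.

Definition X := forall d, Mf d.
Definition eqU (f g : X) : Prop := U (fun d => f d = g d).
Definition Ndom := {P : X -> Prop | exists f, P = eqU f}.
Definition cls (f : X) : Ndom := exist _ (eqU f) (ex_intro _ f erefl).
Definition rep (c : Ndom) : X := proj1_sig (constructive_indefinite_description _ (proj2_sig c)).

Lemma Ndom_ext (c1 c2 : Ndom) : proj1_sig c1 = proj1_sig c2 -> c1 = c2.
Proof.
case: c1 c2 => [P1 H1] [P2 H2] /= e; subst P2; f_equal; exact: proof_irrelevance.
Qed.

Lemma eqU_refl f : eqU f f.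
Proof. exact: U_all. Qed.
Lemma eqU_sym f g : eqU f g -> eqU g f.
Proof. by apply: US. Qed.
Lemma eqU_trans f g h : eqU f g -> eqU g h -> eqU f h.
Proof. by move=> H1 H2; apply: US (UI H1 H2) => d [-> ->]. Qed.

Lemma cls_eq f g : cls f = cls g <-> eqU f g.
Proof.
split.
- move=> e; have : proj1_sig (cls f) g by rewrite e; exact: eqU_refl.
  by [].
- move=> H; apply: Ndom_ext; apply: setext => h /=; split => H'.
    exact: eqU_trans (eqU_sym H) H'.
  exact: eqU_trans H H'.
Qed.

Lemma cls_rep c : cls (rep c) = c.
Proof.
apply: Ndom_ext; rewrite /rep; case: (constructive_indefinite_description _ _) => f /= e.
by rewrite e.
Qed.

Lemma rep_cls f : eqU (rep (cls f)) f.
Proof. by apply/cls_eq; rewrite cls_rep. Qed.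

Definition N : structure L :=
  @Structure L Ndom (cls (fun d => dom_inh (Mf d)))
    (fun f args => cls (fun d => finterp (fun j => rep (args j) d)))
    (fun r args => U (fun d => rinterp (fun j => rep (args j) d))).

Fixpoint term_ind' (P : term L -> Prop) (HV : forall i, P (Var L i))
  (HA : forall f args, (forall j, P (args j)) -> P (@App L f args)) t : P t :=
  match t with
  | Var i => HV i
  | @App _ f args => HA f args (fun j => term_ind' HV HA (args j))
  end.

Lemma tm_los (r : nat -> X) t :
  tm_eval (M := N) (fun i => cls (r i)) t = cls (fun d => tm_eval (M := Mf d) (fun i => r i d) t).
Proof.
elim/term_ind': t => [i|f args IH] //=.
apply/cls_eq.
have Hj j : eqU (rep (tm_eval (M := N) (fun i => cls (r i)) (args j)))
                (fun d => tm_eval (M := Mf d) (fun i => r i d) (args j)).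
  by rewrite IH; exact: rep_cls.
apply: US (U_ord Hj) => d Hd /=; f_equal; apply: functional_extensionality => j; exact: Hd.
Qed.

Lemma los phi : forall r : nat -> X,
  sat (M := N) (fun i => cls (r i)) phi <-> U (fun d => sat (M := Mf d) (fun i => r i d) phi).
Proof.
elim: phi => [t1 t2|rr args|psi IH|psi1 IH1 psi2 IH2|k psi IH] r /=.
- by rewrite !tm_los; exact: cls_eq.
- have Hj j : eqU (rep (tm_eval (M := N) (fun i => cls (r i)) (args j)))
                (fun d => tm_eval (M := Mf d) (fun i => r i d) (args j)).
    by rewrite tm_los; exact: rep_cls.
  have Hu := U_ord Hj.
  split=> H; apply: US (UI H Hu) => d [Hd1 Hd2].
    have <- // : (fun j => rep (tm_eval (M := N) (fun i => cls (r i)) (args j)) d) =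
        (fun j => tm_eval (M := Mf d) (fun i => r i d) (args j)).
    by apply: functional_extensionality => j; exact: Hd2.
  have -> // : (fun j => rep (tm_eval (M := N) (fun i => cls (r i)) (args j)) d) =
      (fun j => tm_eval (M := Mf d) (fun i => r i d) (args j)).
  by apply: functional_extensionality => j; exact: Hd2.
- rewrite IH; split=> H.
    by case: (UC (fun d => sat (M := Mf d) (fun i => r i d) psi)).
  move=> H'; apply: U0; apply: US (UI H H') => d [].
  by move=> a b; exact: a b.
- rewrite IH1 IH2; split=> [[H1 H2]|H]; first exact: UI.
  by split; apply: US H => d [].
- split.
  + move=> [c Hc].
    have e : upd (fun i => cls (r i)) k c = (fun i => cls (upd r k (rep c) i)).
      apply: functional_extensionality => i; rewrite /upd; case: eqP => // _.
      by rewrite cls_rep.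
    rewrite e IH in Hc; apply: US Hc => d Hd; exists (rep c d).
    have <- // : (fun i => upd r k (rep c) i d) = upd (fun i => r i d) k (rep c d).
    by apply: functional_extensionality => i; rewrite /upd; case: eqP.
  + move=> H.
    pose s : X := fun d => match excluded_middle_informative
        (exists a, sat (M := Mf d) (upd (fun i => r i d) k a) psi) with
      | left ex => proj1_sig (constructive_indefinite_description _ ex)
      | right _ => dom_inh (Mf d) end.
    exists (cls s).
    have e : upd (fun i => cls (r i)) k (cls s) = (fun i => cls (upd r k s i)).
      by apply: functional_extensionality => i; rewrite /upd; case: eqP.
    rewrite e IH; apply: US H => d Hd.
    have -> : (fun i => upd r k s i d) = upd (fun i => r i d) k (s d).
      by apply: functional_extensionality => i; rewrite /upd; case: eqP.
    rewrite /s; case: excluded_middle_informative => // ex.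
    by case: (constructive_indefinite_description _ ex).
Qed.

End Ultra.


Module UF.
Import boolp classical_sets filter.
Lemma ultra_nat : exists U : (nat -> Prop) -> Prop,
  U (fun _ => True) /\
  (forall A B, U A -> U B -> U (fun d => A d /\ B d)) /\
  (forall A B : nat -> Prop, (forall d, A d -> B d) -> U A -> U B) /\
  ~ U (fun _ => False) /\
  (forall A, U A \/ U (fun d => ~ A d)) /\
  (forall k, U (fun d => k <= d)).
Proof.
have [G [GU sub]] := @ultraFilterLemma nat eventually _.
exists G; split; first exact: (@filterT _ G).
split; first by move=> A B HA HB; exact: (@filterI _ G _ A B HA HB).
split; first by move=> A B AB HA; exact: (@filterS _ G _ A B AB HA).
split; first exact: (@filter_not_empty _ G _).
split; first by move=> A; exact: (in_ultra_setVsetC A GU).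
move=> k; apply: sub; exists k => //.
Qed.
End UF.

Lemma ultra_weave (L : signature) (T : formula L -> Prop) n phi :
  (forall d, has_weave_depth T n phi d 2 None None true) -> has_weave_omega T n phi 2 None None true.
Proof.
move=> H.
have [U [UT [UI [US [U0 [UC Ut]]]]]] := UF.ultra_nat.
pose Mf d := proj1_sig (constructive_indefinite_description _ (H d)).
have HMf d : models (Mf d) T /\ exists b, is_weave n phi (@tuple_get d) (Some d) 2 None None true b
  := proj2_sig (constructive_indefinite_description _ (H d)).
pose bf d := proj1_sig (constructive_indefinite_description _ (HMf d).2).
have Hbf d : is_weave n phi (@tuple_get d) (Some d) 2 None None true (bf d)
  := proj2_sig (constructive_indefinite_description _ (HMf d).2).
have los' := los UT UI US U0 UC.
pose NN := N Mf U.
pose b (s : nat -> bool * bool) (j : nat) : NN := cls U (fun d => bf d (trunc d s) j).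
have env (a : nat -> X Mf) p :
    xy_env n (fun i => cls U (a i)) (b p) =
    (fun i => cls U (fun d => xy_env n (fun i => a i d) (bf d (trunc d p)) i)).
  by apply: functional_extensionality => i; rewrite /xy_env; case: ifP.
have Hd d : forall tau : seq (bool * bool), lt_depth (Some d) (size tau) -> lt_depth (Some d) (size (id tau)) by [].
have cons_of (C : (nat -> bool * bool) -> Prop) D0 :
    (forall d, D0 <= d -> consistent n phi (bf d) (img (trunc d) C)) ->
    consistent (M := NN) n phi b C.
  move=> HC.
  have Ha d : exists a : nat -> Mf d, D0 <= d ->
      forall p, C p -> sat (xy_env n a (bf d (trunc d p))) phi.
    case: (leqP D0 d) => Hle; last by exists (fun _ => dom_inh (Mf d)).
    have [a Ha] := HC d Hle; exists a => _ p Cp; apply: Ha; by exists p.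
  pose A d := proj1_sig (constructive_indefinite_description _ (Ha d)).
  have HA d : D0 <= d -> forall p, C p -> sat (xy_env n (A d) (bf d (trunc d p))) phi
    := proj2_sig (constructive_indefinite_description _ (Ha d)).
  exists (fun i => cls U (fun d => A d i)) => p Cp.
  rewrite (env (fun i d => A d i)); apply/los'.
  by apply: US (Ut D0) => d Hle; exact: HA.
exists NN; split; [|exists b; split; [|split]].
- move=> psi Tpsi e.
  have -> : e = (fun i => cls U (rep (e i))).
    by apply: functional_extensionality => i; rewrite cls_rep.
  apply/los'; apply: U_all => //= d; exact: (HMf d).1.
- move=> C HC l sl nd inC [a Ha].
  case: l sl nd inC Ha => [|p [|q [|]]] //= _ nd inC Ha.
  have npq : p <> q.
    by move=> epq; subst q; move: nd => /List.NoDup_cons_iff [] /= []; left.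
  have [i Hi] : exists i, p i <> q i.
    apply: NNPP => nex; apply: npq; apply: functional_extensionality => i.
    by apply: NNPP => ne; apply: nex; exists i.
  have [D0 HD0] := up_bound HC.
  have ea : a = (fun i => cls U (rep (a i))).
    by apply: functional_extensionality => k; rewrite cls_rep.
  have Hp := Ha p (or_introl erefl); have Hq := Ha q (or_intror (or_introl erefl)).
  rewrite ea env in Hp; rewrite ea env in Hq.
  move/los' in Hp; move/los' in Hq.
  have [d [[Hpd Hqd] Hle]] := U_ex US U0 (UI _ _ (UI _ _ Hp Hq) (Ut (maxn D0 i.+1))).
  move: Hle; rewrite geq_max => /andP [h1 h2].
  have Uc := up_map (Hd d) (@trunc_ext d) (HD0 d h1).
  apply: ((Hbf d).1 _ Uc [:: trunc d p; trunc d q]) => //.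
  + constructor; last by constructor; [by []|constructor].
    case=> // e; apply: Hi.
    by rewrite -(trunc_get p h2) -(trunc_get q h2) e.
  + move=> x [<-|[<-|[]]]; [exists p; split=> //; apply: inC; left
                           |exists q; split=> //; apply: inC; right; left]; by [].
  + exists (fun i => rep (a i) d) => x [<-|[<-|[]]]; [exact: Hpd|exact: Hqd].
- move=> C HC; have [D0 HD0] := right_bound HC.
  apply: (cons_of C D0) => d Hle.
  exact: (Hbf d).2.1 _ (right_map (Hd d) (@trunc_ext d) (HD0 d Hle)).
- move=> _ C HC; have [D0 HD0] := wide_bound HC.
  apply: (cons_of C D0) => d Hle.
  exact: (Hbf d).2.2 erefl _ (wide_map (Hd d) (@trunc_ext d) (HD0 d Hle)).
Qed.


Lemma weave_omega_nonstrong (L : signature) (T : formula L -> Prop) n phi k mm nn :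
  has_weave_omega T n phi k mm nn true -> has_weave_omega T n phi k mm nn false.
Proof. by move=> [M [HM [b [H1 [H2 _]]]]]; exists M; split=> //; exists b. Qed.

Lemma weave_depth_nonstrong (L : signature) (T : formula L -> Prop) n phi d k mm nn :
  has_weave_depth T n phi d k mm nn true -> has_weave_depth T n phi d k mm nn false.
Proof. by move=> [M [HM [b [H1 [H2 _]]]]]; exists M; split=> //; exists b. Qed.

Lemma weave_omega_up1 (L : signature) (T : formula L -> Prop) n phi k nn s :
  has_weave_omega T n phi k None nn s -> has_weave_omega T n phi k (Some 1) nn s.
Proof.
move=> [M [HM [b [H1 H2]]]]; exists M; split=> //; exists b; split=> // C HC.
exact: H1 (up_bound_weaken HC).
Qed.

Lemma weave_depth_up1 (L : signature) (T : formula L -> Prop) n phi d k nn s :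
  has_weave_depth T n phi d k None nn s -> has_weave_depth T n phi d k (Some 1) nn s.
Proof.
move=> [M [HM [b [H1 H2]]]]; exists M; split=> //; exists b; split=> // C HC.
exact: H1 (up_bound_weaken HC).
Qed.

Theorem proposition4p7 (L : signature) (T : formula L -> Prop)
  (HT : complete_theory T) (n m : nat) (phi : formula L)
  (Hphi : forall i, free_in i phi -> i < n + m) :
  let c1 := admits_cograph_patterns T n phi in
  (c1 <-> has_weave_omega T n phi 2 None None false) /\
  (c1 <-> has_weave_omega T n phi 2 None None true) /\
  (c1 <-> has_weave_omega T n phi 2 (Some 1) None false) /\
  (c1 <-> has_weave_omega T n phi 2 (Some 1) None true) /\
  (c1 <-> forall d : nat, has_weave_depth T n phi d 2 None None false) /\
  (c1 <-> forall d : nat, has_weave_depth T n phi d 2 (Some 1) None false).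
Proof.
move=> c1.
have A1 : c1 -> has_weave_omega T n phi 2 None None true.
  by move=> h; apply: ultra_weave; exact: c1_depth.
have B1 : has_weave_omega T n phi 2 (Some 1) None false -> c1 by exact: c1_of_omega.
have B2 : (forall d, has_weave_depth T n phi d 2 (Some 1) None false) -> c1 by exact: c1_of_depth.
split; [|split; [|split; [|split; [|split]]]]; split.
- by move=> h; apply: weave_omega_nonstrong; exact: A1.
- by move=> h; apply: B1; exact: weave_omega_up1.
- exact: A1.
- by move=> h; apply: B1; apply: weave_omega_up1; exact: weave_omega_nonstrong.
- by move=> h; apply: weave_omega_up1; apply: weave_omega_nonstrong; exact: A1.
- exact: B1.
- by move=> h; apply: weave_omega_up1; exact: A1.
- by move=> h; apply: B1; exact: weave_omega_nonstrong.
- by move=> h d; apply: weave_depth_nonstrong; exact: c1_depth.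
- by move=> h; apply: B2 => d; apply: weave_depth_up1; exact: h.
- by move=> h d; apply: weave_depth_up1; apply: weave_depth_nonstrong; exact: c1_depth.
- exact: B2.
Qed.
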